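(* Let $C>0$, let $l$ be a mostly horizontal inclined to the right line, and let $I$ be an image of width $w$. Then $N(I\cap s(l,C))\leqslant(2C\sqrt2+1)\,w$.
   Context: An image of width $w$ and height $h$ is identified with the set of integer points $(x,y)$, $x\in\{0,\dots,w-1\}$, $y\in\{0,\dots,h-1\}$. For a line $l$ and $C>0$, $s(l,C)=\{r\in\mathbb{R}^2\mid\rho(r,l)\leqslant C/2\}$, $\rho$ the Euclidean distance. A line is mostly horizontal inclined to the right if it has equation $y=ax+b$ with $0\leqslant a\leqslant1$. For $D\subseteq\mathbb{R}^2$, $N(D)=|\mathbb{Z}^2\cap D|$. *)

(* Defs.v *)
From mathcomp Require Import all_boot all_order all_algebra.
From mathcomp Require Import all_classical all_reals.
Set Implicit Arguments. Unset Strict Implicit. Unset Printing Implicit Defensive.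
Import Order.TTheory GRing.Theory Num.Theory.
Local Open Scope classical_set_scope.
Local Open Scope ring_scope.

Definition edist {R : realType} (p q : R * R) : R :=
  Num.sqrt ((p.1 - q.1) ^+ 2 + (p.2 - q.2) ^+ 2).

Definition line_pts {R : realType} (a b : R) : set (R * R) :=
  [set q | q.2 = a * q.1 + b].

Definition dist_to_line {R : realType} (a b : R) (r : R * R) : R :=
  inf [set edist r q | q in line_pts a b].

Definition strip {R : realType} (a b C : R) : set (R * R) :=
  [set r | dist_to_line a b r <= C / 2].

(* the image of width w and height h: integer points (x, y), x < w, y < h.
   N(I ∩ D) = number of such points lying in D. *)
Definition N_image {R : realType} (w h : nat) (D : set (R * R)) : nat :=
  #|[set p : 'I_w * 'I_h | `[< D ((p.1 : nat)%:R, (p.2 : nat)%:R) >] ]|.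

(* Main.v *)
Require Import Defs.
From mathcomp Require Import all_boot all_order all_algebra.
From mathcomp Require Import all_classical all_reals.
From mathcomp Require Import ring lra zify.
Import Order.TTheory GRing.Theory Num.Theory.
Local Open Scope ring_scope.

Lemma strip_bound (R : realType) (a b C : R) (r : R * R) :
  0 <= a -> a <= 1 -> strip a b C r -> `|r.2 - a * r.1 - b| <= C.
Proof.
move=> a0 a1; rewrite /strip /= /dist_to_line => H.
set d := `|r.2 - a * r.1 - b|.
suff : d / 2 <= C / 2 by lra.
apply: le_trans H; apply: lb_le_inf.
  by exists (edist r (0, b)), (0, b) => //; rewrite /line_pts /= mulr0 add0r.
move=> _ [q qL <-]; rewrite /line_pts /= in qL.
have hx : `|r.1 - q.1| <= edist r q.
  rewrite /edist -(sqrtr_sqr (r.1 - q.1)) ler_wsqrtr //.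
  by rewrite lerDl sqr_ge0.
have hy : `|r.2 - q.2| <= edist r q.
  rewrite /edist -(sqrtr_sqr (r.2 - q.2)) ler_wsqrtr //.
  by rewrite lerDr sqr_ge0.
rewrite /d; have -> : r.2 - a * r.1 - b = (r.2 - q.2) - a * (r.1 - q.1) by rewrite qL; ring.
rewrite ler_pdivrMr // (le_trans (ler_normB _ _)) //.
rewrite normrM (ger0_norm a0).
have : a * `|r.1 - q.1| <= `|r.1 - q.1|.
  by rewrite ler_piMl.
lra.
Qed.
Lemma col_bound (R : realType) (h : nat) (c C : R) (S : {set 'I_h}) :
  0 <= C -> (forall y, y \in S -> `|(y : nat)%:R - c| <= C) ->
  (#|S|%:R : R) <= 2 * C + 1.
Proof.
move=> C0 HS.
case: (set_0Vmem S) => [->|[y0 y0S]]; first by rewrite cards0; lra.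
case: (arg_minnP (fun y : 'I_h => (y : nat)) y0S) => lo loS lomin.
case: (arg_maxnP (fun y : 'I_h => (y : nat)) y0S) => hi hiS himax.
have lohi : (lo <= hi)%N by apply: lomin.
have : (#|S| <= (hi - lo).+1)%N.
  have inj : {in S &, injective (fun y : 'I_h => (inord (y - lo) : 'I_(hi - lo).+1))}.
    move=> y y' yS y'S /(congr1 val) /=.
    have h1 := lomin _ yS; have h2 := himax _ yS.
    have h3 := lomin _ y'S; have h4 := himax _ y'S.
    rewrite !inordK; try (rewrite ltnS; apply: leq_sub2r => //).
    by move=> e; apply: val_inj => /=; lia.
  rewrite -(card_in_imset inj) -[X in (_ <= X)%N](card_ord (hi - lo).+1).
  exact: max_card.
rewrite -(ler_nat R) => /le_trans; apply.
rewrite -addn1 natrD natrB //.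
have := HS _ loS; have := HS _ hiS.
rewrite !ler_norml => /andP[a1 a2] /andP[a3 a4].
lra.
Qed.

Theorem proposition13 (R : realType) (C a b : R) (w h : nat) :
  0 < C -> 0 <= a -> a <= 1 ->
  ((N_image w h (strip a b C))%:R : R) <= (2 * C * Num.sqrt 2 + 1) * w%:R.
Proof.
move=> C0 a0 a1; rewrite /N_image.
match goal with |- context [ #|?X| ] => set A := X end.
have -> : #|A| = (\sum_(x : 'I_w) #|[set y : 'I_h | (x, y) \in A]|)%N.
  rewrite -sum1_card.
  under [in RHS]eq_bigr => x _ do rewrite -sum1_card.
  rewrite pair_big_dep /=; apply: eq_bigl => -[x y] /=.
  by rewrite inE.
rewrite natr_sum.
apply: (@le_trans _ _ (\sum_(x : 'I_w) (2 * C + 1))).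
  apply: ler_sum => x _; apply: (@col_bound R h (a * (x : nat)%:R + b) C).
    exact: ltW.
  move=> y; rewrite !inE => /asboolP /strip_bound -/(_ a0 a1) /=.
  by rewrite opprD addrA.
rewrite sumr_const card_ord -[_ *+ w]mulr_natr.
have : (0:R) <= w%:R by rewrite ler0n.
have : 1 <= Num.sqrt (2 : R).
  rewrite -[X in X <= _]sqrtr1 ler_wsqrtr //; lra.
move=> hs hw; apply: ler_wpM2r => //.
have : C * 1 <= C * Num.sqrt 2 by rewrite ler_wpM2l // ltW.
lra.
Qed.
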